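(* Fix $i,j\in I$ with $\tau(i)=i\neq j$, and for $m,n\in\mathbb{N}$ let $w_{m,n}(x,y)\in\mathbb{K}[x,y]$ be the unique polynomial with $F_i^mF_jF_i^n=\sum_{r,s}b_{rs}F_i^{\circledast r}\circledast F_j\circledast F_i^{\circledast s}$ in $\mathcal{A}$, where $w_{m,n}(x,y)=\sum_{r,s}b_{rs}x^ry^s$. Then $$w_{m,n}(x,y)=\frac{H_{m,n}(b_ix,b_iy;q_i^2,q_i^{a_{ij}})}{(2b_i)^{m+n}},$$ where $b_i=\tfrac12(q_i-q_i^{-1})c_i^{-1/2}q_i^{-1/2}$ (in a quadratic extension of $\mathbb{K}$; the right-hand side depends only on $b_i^2=\frac{(q_i-q_i^{-1})^2}{4c_iq_i}$ and lies in $\mathbb{K}[x,y]$).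
   Context: Let $I$ be a finite set and $(a_{kl})_{k,l\in I}$ a symmetrizable generalized Cartan matrix, with relatively prime positive integers $d_k$ such that $(d_ka_{kl})$ is symmetric. Let $Q=\bigoplus_{k\in I}\mathbb{Z}\alpha_k$ with $(\alpha_k,\alpha_l)=d_ka_{kl}$, $Q^+=\bigoplus_k\mathbb{N}\alpha_k$. Let $\mathbb{K}$ be a field of characteristic zero, $q\in\mathbb{K}^\times$ with $q^{2d_k}\neq1$ for all $k$, $q_k=q^{d_k}$. Let $\tau:I\to I$ be a bijection with $\tau^2=\mathrm{id}$ and $a_{\tau(k)\tau(l)}=a_{kl}$, and $(c_k)\in(\mathbb{K}^\times)^I$ with $c_k=c_{\tau(k)}$ whenever $a_{k\tau(k)}=0$. Let $T(V^-)=\mathbb{K}\langle F_k:k\in I\rangle$ be the free algebra graded by $-Q^+$ ($\deg F_k=-\alpha_k$), with linear maps $\partial_k^L,\partial_k^R$ defined by $\partial_k^{L}(F_l)=\partial_k^R(F_l)=\delta_{kl}$, $\partial^{L}_k(1)=\partial^R_k(1)=0$ and, for $f$ of degree $-\mu$, $g$ of degree $-\nu$: $\partial_k^R(fg)=q^{(\alpha_k,\nu)}\partial_k^R(f)g+f\partial_k^R(g)$, $\partial_k^L(fg)=\partial_k^L(f)g+q^{(\alpha_k,\mu)}f\partial_k^L(g)$. Let $G_\theta\subseteq Q$ be generated by $\alpha_k-\alpha_{\tau(k)}$, and $\mathcal{A}$ the $\mathbb{K}$-algebra generated by $T(V^-)$ and $K_\mu$ ($\mu\in G_\theta$) with $K_0=1$,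 $K_\mu K_\nu=K_{\mu+\nu}$, $K_\mu F_k=q^{-(\mu,\alpha_k)}F_kK_\mu$; $K_{\tau(k)}K_k^{-1}:=K_{\alpha_{\tau(k)}-\alpha_k}$, $H_\theta=\mathrm{span}\{K_\mu\}$. By earlier work there is a unique associative product $\circledast$ on $\mathcal{A}$ with $h\circledast g=hg$, $g\circledast h=gh$ ($h\in H_\theta$, $g\in T(V^-)$) and $F_k\circledast g=F_kg-\frac{c_kq^{(\alpha_k,\alpha_{\tau(k)})}}{q_k-q_k^{-1}}K_{\tau(k)}K_k^{-1}\partial^L_{\tau(k)}(g)$. Bivariate continuous $p$-Hermite polynomials: $H_n(x;p)$ is defined by $H_{-1}=0$, $H_0=1$, $H_{n+1}=2xH_n-(1-p^n)H_{n-1}$; $H_{m,n}(x,y;p,r)$ is defined by $H_{-1,n}=H_{m,-1}=0$, $H_{0,n}(x,y;p,r)=H_n(y;p)$, and $H_{m+1,n}=2xH_{m,n}-(1-p^m)H_{m-1,n}-p^m(1-p^n)rH_{m,n-1}$ for $m,n\ge0$. *)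

(* Defs.v *)
From HB Require Import structures.
From mathcomp Require Import all_boot all_order all_algebra.
Set Implicit Arguments. Unset Strict Implicit. Unset Printing Implicit Defensive.
Import Order.TTheory GRing.Theory Num.Theory.
Local Open Scope ring_scope.

Section Defs.
Variables (I : finType) (K : fieldType).
(* Cartan data: a (GCM), d (symmetrizers), q, tau, c. *)
Variables (a : I -> I -> int) (d : I -> nat) (q : K) (tau : I -> I) (c : I -> K).

(* The root lattice Q = (+)_k Z alpha_k, elements as coordinate functions. *)
Definition simple_root (k : I) : {ffun I -> int} := [ffun l => (l == k)%:Z].

Definition bform (mu nu : {ffun I -> int}) : int :=
  \sum_k \sum_l mu k * nu l * ((d k)%:Z * a k l).

(* weight mu of a word (the word F_{l1}...F_{ln} has degree -mu) *)
Definition wt (u : seq I) : {ffun I -> int} := \sum_(k <- u) simple_root k.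

(* T(V^-) = K<F_k : k in I>, embedded in its completion: an element is the
   function  word |-> coefficient  (the word l1...ln stands for F_l1...F_ln). *)
Definition ser := seq I -> K.
Definition ser_word (w : seq I) : ser := fun u => (u == w)%:R.
Definition ser_mul (f g : ser) : ser :=
  fun u => \sum_(p < (size u).+1) f (take p u) * g (drop p u).

(* partial^L_k : the unique linear map with partial^L_k(F_l) = delta_kl,
   partial^L_k(1) = 0 and
   partial^L_k(fg) = partial^L_k(f) g + q^{(alpha_k,mu)} f partial^L_k(g)
   (deg f = -mu); on a word it deletes one occurrence of F_k, weighted by
   q^{(alpha_k, weight of the letters to its left)}. *)
Definition dL (k : I) (f : ser) : ser := fun u =>
  \sum_(p < (size u).+1)
     q ^ (bform (simple_root k) (wt (take p u))) * f (take p u ++ k :: drop p u).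

(* The algebra A generated by T(V^-) and the K_mu: every element is uniquely
   sum_mu K_mu g_mu; we represent it by mu |-> g_mu. *)
Definition Aelt := {ffun I -> int} -> ser.
Definition embT (g : ser) : Aelt := fun nu => if nu == 0 then g else (fun _ => 0).

Definition qk (k : I) : K := q ^+ d k.
Definition kappa (k : I) : K :=
  c k * q ^ (bform (simple_root k) (simple_root (tau k))) / (qk k - (qk k)^-1).
Definition beta (k : I) : {ffun I -> int} := simple_root (tau k) - simple_root k.

(* On g in T(V^-):
     F_k [*] g = F_k g - kappa_k K_{tau k} K_k^{-1} partial^L_{tau k}(g);
   extended to K_mu g via associativity:
     F_k [*] (K_mu g) = (F_k K_mu) [*] g = q^{(mu,alpha_k)} K_mu (F_k [*] g). *)
Definition starF (k : I) (X : Aelt) : Aelt := fun nu u =>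
  q ^ (bform nu (simple_root k)) * ser_mul (ser_word [:: k]) (X nu) u
  - kappa k * q ^ (bform (nu - beta k) (simple_root k))
      * dL (tau k) (X (nu - beta k)) u.

Definition star_mono (i j : I) (r s : nat) : Aelt :=
  iter r (starF i) (starF j (iter s (starF i) (embT (ser_word [::])))).

(* F_i^m F_j F_i^n = sum_{r,s} b_rs F_i^{[*]r} [*] F_j [*] F_i^{[*]s},
   where w = sum_s (sum_r b_rs x^r) y^s, i.e. b_rs = (w`_s)`_r
   (outer variable y, inner variable x). *)
Definition expansion (i j : I) (m n : nat) (w : {poly {poly K}}) : Prop :=
  embT (ser_word (nseq m i ++ j :: nseq n i)) =
  (fun nu u => \sum_(s < size w) \sum_(r < size w`_s)
                  (w`_s)`_r * star_mono i j r s nu u).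

End Defs.

Section Hermite.
Variable R : comNzRingType.

Fixpoint hermite1 (x p : R) (n : nat) : R :=
  match n with
  | 0 => 1
  | S n' => match n' with
            | 0 => 2 * x
            | S n'' => 2 * x * hermite1 x p n' - (1 - p ^+ n') * hermite1 x p n''
            end
  end.

Fixpoint hermite2 (x y p r : R) (m n : nat) {struct m} : R :=
  match m with
  | 0 => hermite1 y p n
  | S m' => 2 * x * hermite2 x y p r m' n
            - (1 - p ^+ m') * (match m' with 0 => 0 | S m'' => hermite2 x y p r m'' n end)
            - p ^+ m' * (1 - p ^+ n) * r
                * (match n with 0 => 0 | S n' => hermite2 x y p r m' n' end)
  end.
End Hermite.

(* Main.v *)
Require Import Defs.
From HB Require Import structures.
From mathcomp Require Import all_boot all_order all_algebra.
From Stdlib Require Import FunctionalExtensionality.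
From mathcomp Require Import ring zify.
Set Implicit Arguments. Unset Strict Implicit. Unset Printing Implicit Defensive.
Import Order.TTheory GRing.Theory Num.Theory.
Local Open Scope ring_scope.

Section Words.
Variables (I : finType) (K : fieldType) (a : I -> I -> int) (d : I -> nat).
Variables (q : K) (tau : I -> I) (c : I -> K) (i j : I).
Hypotheses (q0 : q != 0) (ij : i != j).

Lemma bform_sr k nu :
  bform a d (simple_root k) nu = \sum_l nu l * ((d k)%:Z * a k l).
Proof.
rewrite /bform (bigD1 k) //= [X in _ + X]big1 => [|k' nk]; last first.
  by apply: big1 => l _; rewrite /simple_root ffunE (negbTE nk) !mul0r.
by rewrite addr0; apply: eq_bigr => l _; rewrite /simple_root ffunE eqxx mul1r.
Qed.

Lemma bform_sr_sr k l :
  bform a d (simple_root k) (simple_root l) = (d k)%:Z * a k l.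
Proof.
rewrite bform_sr (bigD1 l) //= [X in _ + X]big1 => [|l' nl]; last by rewrite /simple_root ffunE (negbTE nl) mul0r.
by rewrite /simple_root ffunE eqxx mul1r addr0.
Qed.

Lemma wt_cons x (u : seq I) : wt (x :: u) = simple_root x + wt u.
Proof. by rewrite /wt big_cons. Qed.

Lemma bform_wt_cons k x u :
  bform a d (simple_root k) (wt (x :: u)) =
  (d k)%:Z * a k x + bform a d (simple_root k) (wt u).
Proof.
rewrite wt_cons !bform_sr -bform_sr_sr bform_sr -big_split /=.
by apply: eq_bigr => l _; rewrite ffunE mulrDl.
Qed.

Lemma bform_wt_nil k : bform a d (simple_root k) (wt ([::] : seq I)) = 0.
Proof. by rewrite bform_sr big1 // => l _; rewrite /wt big_nil ffunE !mul0r. Qed.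

Lemma bform0 nu : bform a d 0 nu = 0.
Proof. by rewrite /bform big1 // => k _; rewrite big1 // => l _; rewrite ffunE !mul0r. Qed.

Lemma dL_nil k f : dL a d q k f [::] = f [:: k].
Proof. by rewrite /dL big_ord_recl big_ord0 /= bform_wt_nil expr0z mul1r addr0. Qed.

Lemma dL_cons k f x u :
  dL a d q k f (x :: u) =
  f (k :: x :: u) + q ^ ((d k)%:Z * a k x) * dL a d q k (fun v => f (x :: v)) u.
Proof.
rewrite /dL big_ord_recl /= bform_wt_nil expr0z mul1r; congr (_ + _).
rewrite mulr_sumr; apply: eq_bigr => p _ /=; rewrite add0n.
by rewrite bform_wt_cons expfzDr // mulrA.
Qed.

Lemma ser_mul1 (k : I) (g : ser I K) (u : seq I) :
  ser_mul (ser_word K [:: k]) g u = if u is x :: u' then (x == k)%:R * g u' else 0.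
Proof.
case: u => [|x u']; rewrite /ser_mul big_ord_recl /=.
  by rewrite big_ord0 /ser_word /= mul0r addr0.
rewrite {1}/ser_word /= mul0r add0r big_ord_recl /=.
rewrite {1}/ser_word /= eqseq_cons !add0n take0 drop0 andbT.
case: u' => [|y u''] /=; first by rewrite big_ord0 addr0.
by rewrite big1 ?addr0 // => p _; rewrite /bump /= /ser_word /= eqseq_cons /= andbF mul0r.
Qed.


Lemma eq_dL k (f f' : ser I K) u : (forall v, f v = f' v) -> dL a d q k f u = dL a d q k f' u.
Proof. by move=> e; apply: eq_bigr => p _; rewrite e. Qed.

Lemma dL0 k (f : ser I K) u : (forall v, f v = 0) -> dL a d q k f u = 0.
Proof. by move=> e; apply: big1 => p _; rewrite e mulr0. Qed.

Definition shape (u : seq I) :=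
  (count_mem j u == 1%N) && all (fun x => (x == i) || (x == j)) u.
Definition ser1 (g : nat -> K) : ser I K :=
  fun u => if all (pred1 i) u then g (size u) else 0.
Definition ser2 (f : nat -> nat -> K) : ser I K :=
  fun u => if shape u then f (index j u) (size u - (index j u).+1)%N else 0.

Lemma ji : (j == i) = false.
Proof. by rewrite eq_sym (negbTE ij). Qed.

Lemma eq_ser1 g g' u : (forall n, g n = g' n) -> ser1 g u = ser1 g' u.
Proof. by move=> e; rewrite /ser1 e. Qed.
Lemma eq_ser2 f f' u : (forall a b, f a b = f' a b) -> ser2 f u = ser2 f' u.
Proof. by move=> e; rewrite /ser2 e. Qed.
Lemma ser1_0 g u : (forall n, g n = 0) -> ser1 g u = 0.
Proof. by move=> e; rewrite /ser1 e; case: ifP. Qed.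
Lemma ser2_0 f u : (forall a b, f a b = 0) -> ser2 f u = 0.
Proof. by move=> e; rewrite /ser2 e; case: ifP. Qed.

Lemma ser1_nil g : ser1 g [::] = g 0%N.
Proof. by []. Qed.
Lemma ser1_cons_i g u : ser1 g (i :: u) = ser1 (fun n => g n.+1) u.
Proof. by rewrite /ser1 /= eqxx. Qed.
Lemma ser1_cons_ne g x u : x != i -> ser1 g (x :: u) = 0.
Proof. by move=> xi; rewrite /ser1 /= (negbTE xi). Qed.

Lemma shape_cons_i u : shape (i :: u) = shape u.
Proof. by rewrite /shape /= eqxx /= (negbTE ij) add0n. Qed.

Lemma count_all_i u :
  (count_mem j u == 0%N) && all (fun x => (x == i) || (x == j)) u = all (pred1 i) u.
Proof.
elim: u => //= x u IH.
have [E|xi] := eqVneq x i; first by subst x; rewrite (negbTE ij) add0n /= IH.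
have [E|xj] := eqVneq x j; first by subst x.
by rewrite /= andbF.
Qed.

Lemma shape_cons_j u : shape (j :: u) = all (pred1 i) u.
Proof.
by rewrite /shape /= eqxx add1n eqSS orbT /= count_all_i.
Qed.

Lemma shape_cons_ne x u : x != i -> x != j -> shape (x :: u) = false.
Proof. by move=> xi xj; rewrite /shape /= (negbTE xi) (negbTE xj) /= andbF. Qed.

Lemma ser2_nil f : ser2 f [::] = 0.
Proof. by []. Qed.
Lemma ser2_cons_i f u : ser2 f (i :: u) = ser2 (fun a b => f a.+1 b) u.
Proof.
rewrite /ser2 shape_cons_i /= (negbTE ij).
by case: ifP.
Qed.
Lemma ser2_cons_j f u : ser2 f (j :: u) = ser1 (f 0%N) u.
Proof. by rewrite /ser2 shape_cons_j /= eqxx subSS subn0. Qed.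
Lemma ser2_cons_ne f x u : x != i -> x != j -> ser2 f (x :: u) = 0.
Proof. by move=> xi xj; rewrite /ser2 shape_cons_ne. Qed.

Lemma ser1_at g n : ser1 g (nseq n i) = g n.
Proof. by rewrite /ser1 all_pred1_nseq size_nseq. Qed.

Lemma ser2_at f A B : ser2 f (nseq A i ++ j :: nseq B i) = f A B.
Proof.
elim: A f => [|A IH] f /=; first by rewrite ser2_cons_j ser1_at.
by rewrite ser2_cons_i IH.
Qed.

Lemma shapeP u : shape u -> exists A B, u = nseq A i ++ j :: nseq B i.
Proof.
elim: u => // x u IH.
have [E|xi] := eqVneq x i; first by subst x; rewrite shape_cons_i => /IH [A [B ->]]; exists A.+1, B.
have [E|xj] := eqVneq x j; last by rewrite shape_cons_ne.
subst x.
by rewrite shape_cons_j => /all_pred1P ->; exists 0%N, (size u).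
Qed.


Definition pp := q ^ ((d i)%:Z * a i i).
Definition rr := q ^ ((d i)%:Z * a i j).
Definition gsum n := \sum_(t < n) pp ^+ t.
Definition shift1 (g : nat -> K) n := if n is n'.+1 then g n' else 0.
Definition shiftA (f : nat -> nat -> K) A B := if A is A'.+1 then f A' B else 0.
Definition Jf (g : nat -> K) A (B : nat) := if A is 0%N then g B else 0.
Definition D1 (g : nat -> K) n := gsum n.+1 * g n.+1.
Definition D2 (f : nat -> nat -> K) A B :=
  gsum A.+1 * f A.+1 B + pp ^+ A * rr * gsum B.+1 * f A B.+1.

Lemma gsumS n : gsum n.+1 = 1 + pp * gsum n.
Proof.
rewrite /gsum big_ord_recl expr0 mulr_sumr; congr (_ + _).
by apply: eq_bigr => t _; rewrite exprS.
Qed.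

Lemma ser_mul_i_ser1 g u :
  ser_mul (ser_word K [:: i]) (ser1 g) u = ser1 (shift1 g) u.
Proof.
rewrite ser_mul1; case: u => [|x u] //.
have [E|xi] := eqVneq x i; last by rewrite ser1_cons_ne // mul0r.
by subst x; rewrite ser1_cons_i mul1r.
Qed.

Lemma ser_mul_i_ser2 f u :
  ser_mul (ser_word K [:: i]) (ser2 f) u = ser2 (shiftA f) u.
Proof.
rewrite ser_mul1; case: u => [|x u] //.
have [E|xi] := eqVneq x i; first by subst x; rewrite ser2_cons_i mul1r.
rewrite mul0r; have [E|xj] := eqVneq x j; last by rewrite ser2_cons_ne.
by subst x; rewrite ser2_cons_j ser1_0.
Qed.

Lemma ser_mul_j_ser1 g u :
  ser_mul (ser_word K [:: j]) (ser1 g) u = ser2 (Jf g) u.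
Proof.
rewrite ser_mul1; case: u => [|x u] //.
have [E|xj] := eqVneq x j; first by subst x; rewrite ser2_cons_j mul1r.
rewrite mul0r; have [E|xi] := eqVneq x i; last by rewrite ser2_cons_ne.
by subst x; rewrite ser2_cons_i ser2_0.
Qed.

Lemma dL_ne_ser1 k g u : k != i -> dL a d q k (ser1 g) u = 0.
Proof.
move=> ki; apply: big1 => p _.
by rewrite /ser1 all_cat /= (negbTE ki) /= andbF mulr0.
Qed.

Lemma dL_i_ser1 g u : dL a d q i (ser1 g) u = ser1 (D1 g) u.
Proof.
elim: u g => [|x u IH] g.
  by rewrite dL_nil /D1 /gsum /ser1 /= eqxx big_ord1 expr0 mul1r.
rewrite dL_cons.
have [E|xi] := eqVneq x i; last first.
  rewrite ser1_cons_i ser1_cons_ne // ser1_cons_ne // add0r (@dL0 _ _ u) ?mulr0 //.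
  by move=> v; rewrite ser1_cons_ne.
subst x; rewrite -/pp ser1_cons_i ser1_cons_i.
rewrite (@eq_dL _ _ (ser1 (fun n => g n.+1))); last by move=> v; rewrite ser1_cons_i.
rewrite IH /ser1 /= eqxx /=; case: ifP => _; last by rewrite mulr0 addr0.
by rewrite /D1 [gsum (size u).+2]gsumS; ring.
Qed.

Lemma dL_i_ser2 f u : dL a d q i (ser2 f) u = ser2 (D2 f) u.
Proof.
elim: u f => [|x u IH] f.
  by rewrite dL_nil ser2_cons_i.
rewrite dL_cons.
have [E|xi] := eqVneq x i.
  subst x; rewrite -/pp ser2_cons_i ser2_cons_i ser2_cons_i.
  rewrite (@eq_dL _ _ (ser2 (fun a b => f a.+1 b))); last by move=> v; rewrite ser2_cons_i.
  rewrite IH /ser2; case: ifP => _; last by rewrite mulr0 addr0.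
  rewrite /D2; set A := index _ _; set B := (_ - _)%N.
  by rewrite [gsum A.+2]gsumS exprS; ring.
have [E|xj] := eqVneq x j; last first.
  rewrite ser2_cons_i ser2_cons_ne // ser2_cons_ne // add0r (@dL0 _ _ u) ?mulr0 //.
  by move=> v; rewrite ser2_cons_ne.
subst x; rewrite -/rr ser2_cons_i ser2_cons_j ser2_cons_j.
rewrite (@eq_dL _ _ (ser1 (f 0%N))); last by move=> v; rewrite ser2_cons_j.
rewrite dL_i_ser1 /ser1; case: ifP => _; last by rewrite mulr0 addr0.
by rewrite /D2 /D1 [gsum 1]/gsum big_ord1 !expr0; ring.
Qed.


Lemma shape_at A B : shape (nseq A i ++ j :: nseq B i).
Proof.
elim: A => [|A IH] /=; first by rewrite shape_cons_j all_pred1_nseq.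
by rewrite shape_cons_i.
Qed.

Lemma index_at A B : index j (nseq A i ++ j :: nseq B i) = A.
Proof.
by rewrite index_cat mem_nseq ji andbF /= eqxx addn0 size_nseq.
Qed.

Lemma ser2_ns f u : ~~ shape u -> ser2 f u = 0.
Proof. by move=> ns; rewrite /ser2 (negbTE ns). Qed.

Lemma ser_word_2 m n u :
  ser_word K (nseq m i ++ j :: nseq n i) u =
  ser2 (fun A B => ((A == m) && (B == n))%:R) u.
Proof.
case: (boolP (shape u)) => [/shapeP [A [B ->]]|ns].
  rewrite ser2_at /ser_word; congr (_%:R); congr nat_of_bool.
  apply/idP/idP => [/eqP E|/andP [/eqP -> /eqP ->]] //.
  have eA : A = m by rewrite -(index_at A B) E index_at.
  subst A; rewrite eqxx /=.
  have := congr1 size E; rewrite !size_cat /= !size_nseq => /eqP.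
  by rewrite eqn_add2l eqSS.
rewrite ser2_ns // /ser_word; case E: (u == _) => //.
by move/eqP: E ns => ->; rewrite shape_at.
Qed.

Lemma ser_word_0 u : ser_word K [::] u = ser1 (fun n => (n == 0%N)%:R) u.
Proof.
case: u => [|x u] //; rewrite /ser_word /ser1 /=.
by case: ifP.
Qed.

End Words.

Section Alg.
Variables (I : finType) (K : fieldType) (a : I -> I -> int) (d : I -> nat).
Variables (q : K) (tau : I -> I) (c : I -> K) (i j : I).
Hypotheses (q0 : q != 0) (ij : i != j) (taui : tau i = i) (tauj : tau j != i).

Local Notation pp := (pp a d q i).
Local Notation kap := (kappa a d q tau c i).
Definition A1 (g : nat -> K) n := shift1 g n - kap * D1 a d q i g n.
Definition A2 (f : nat -> nat -> K) A B := shiftA f A B - kap * D2 a d q i j f A B.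
Definition d0 n : K := (n == 0%N)%:R.
Definition d2 (m n A B : nat) : K := ((A == m) && (B == n))%:R.
Definition T r s := iter r A2 (Jf (iter s A1 d0)).

Lemma ser_mul0 k u : ser_mul (ser_word K [:: k]) (fun _ : seq I => 0) u = 0.
Proof. by rewrite ser_mul1; case: u => // x u; rewrite mulr0. Qed.

Lemma starF_i (s : ser I K) :
  starF a d q tau c i (embT s) =
  embT (fun u => ser_mul (ser_word K [:: i]) s u - kap * dL a d q i s u).
Proof.
apply: functional_extensionality => nu; apply: functional_extensionality => u.
rewrite /starF /embT /beta taui subrr subr0.
case: eqP => [->|_]; first by rewrite bform0 expr0z !mul1r mulr1.
by rewrite ser_mul0 dL0 // !mulr0 subr0.
Qed.

Lemma starF_j_ser1 g :
  starF a d q tau c j (embT (ser1 i g)) = embT (ser2 i j (Jf g)).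
Proof.
apply: functional_extensionality => nu; apply: functional_extensionality => u.
rewrite /starF.
have -> : dL a d q (tau j) (embT (ser1 i g) (nu - beta tau j)) u = 0.
  by rewrite /embT; case: ifP => _; [apply: dL_ne_ser1 | apply: dL0].
rewrite mulr0 subr0 /embT.
case: eqP => [->|_]; first by rewrite bform0 expr0z mul1r ser_mul_j_ser1.
by rewrite ser_mul0 mulr0.
Qed.

Lemma iter_A1 s g :
  iter s (starF a d q tau c i) (embT (ser1 i g)) = embT (ser1 i (iter s A1 g)).
Proof.
elim: s => //= s ->; rewrite starF_i; congr embT.
apply: functional_extensionality => u.
rewrite ser_mul_i_ser1 dL_i_ser1 // /ser1; case: ifP => _ //.
by rewrite mulr0 subr0.
Qed.

Lemma iter_A2 r f :
  iter r (starF a d q tau c i) (embT (ser2 i j f)) = embT (ser2 i j (iter r A2 f)).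
Proof.
elim: r => //= r ->; rewrite starF_i; congr embT.
apply: functional_extensionality => u.
rewrite ser_mul_i_ser2 // dL_i_ser2 // /ser2; case: ifP => _ //.
by rewrite mulr0 subr0.
Qed.

Lemma star_mono_T r s :
  star_mono a d q tau c i j r s = embT (ser2 i j (T r s)).
Proof.
rewrite /star_mono.
have -> : embT (ser_word K [::]) = embT (ser1 i d0).
  by congr embT; apply: functional_extensionality => u; rewrite (@ser_word_0 _ _ i).
by rewrite iter_A1 starF_j_ser1 iter_A2.
Qed.

Definition Sw (w : {poly {poly K}}) A B :=
  \sum_(s < size w) \sum_(r < size w`_s) (w`_s)`_r * T r s A B.

Lemma expansion_iff m n w :
  expansion a d q tau c i j m n w <-> forall A B, d2 m n A B = Sw w A B.
Proof.
split => H.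
  move=> A B; have := congr1 (fun F => F 0 (nseq A i ++ j :: nseq B i)) H.
  rewrite /= /embT eqxx ser_word_2 // ser2_at // /d2 => ->.
  apply: eq_bigr => s _; apply: eq_bigr => r _.
  by rewrite star_mono_T /embT eqxx ser2_at.
apply: functional_extensionality => nu; apply: functional_extensionality => u.
rewrite /embT; case: eqP => [->|nz]; last first.
  rewrite big1 // => s _; rewrite big1 // => r _.
  by rewrite star_mono_T /embT (introF eqP nz) mulr0.
rewrite ser_word_2 //.
case: (boolP (shape i j u)) => [/(shapeP ij) [A [B ->]]|ns].
  rewrite ser2_at // -/(d2 m n A B) H; apply: eq_bigr => s _; apply: eq_bigr => r _.
  by rewrite star_mono_T /embT eqxx ser2_at.
rewrite ser2_ns // big1 // => s _; rewrite big1 // => r _.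
by rewrite star_mono_T /embT eqxx ser2_ns // mulr0.
Qed.


Local Notation gsum := (gsum a d q i).
Local Notation rr := (rr a d q i j).

Lemma eq_A1 f f' b : (forall x, f x = f' x) -> A1 f b = A1 f' b.
Proof. by move=> e; rewrite /A1 /shift1 /D1; case: b => [|b]; rewrite !e. Qed.

Lemma eq_A2 f f' A B : (forall x y, f x y = f' x y) -> A2 f A B = A2 f' A B.
Proof. by move=> e; rewrite /A2 /shiftA /D2; case: A => [|A]; rewrite !e. Qed.

Lemma A1_sum (X : finType) (G : X -> nat -> K) b :
  A1 (fun x => \sum_(k : X) G k x) b = \sum_(k : X) A1 (G k) b.
Proof.
rewrite /A1 /D1 sumrB; congr (_ - _).
  by rewrite /shift1; case: b => [|b] //; rewrite big1.
by rewrite !mulr_sumr.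
Qed.

Lemma A1_scale (cc : K) g b : A1 (fun x => cc * g x) b = cc * A1 g b.
Proof. by rewrite /A1 /shift1 /D1; case: b => [|b]; ring. Qed.

Lemma A2_sum (X : finType) (G : X -> nat -> nat -> K) A B :
  A2 (fun x y => \sum_(k : X) G k x y) A B = \sum_(k : X) A2 (G k) A B.
Proof.
rewrite /A2 /D2 sumrB; congr (_ - _).
  by rewrite /shiftA; case: A => [|A] //; rewrite big1.
by rewrite !mulr_sumr -big_split /= mulr_sumr; apply: eq_bigr => k _; rewrite mulrDr.
Qed.

Lemma A2_scale (cc : K) f A B : A2 (fun x y => cc * f x y) A B = cc * A2 f A B.
Proof. by rewrite /A2 /shiftA /D2; case: A => [|A]; ring. Qed.

Lemma sum_widen n N (F : nat -> K) :
  (n <= N)%N -> (forall k, (n <= k)%N -> F k = 0) ->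
  \sum_(k < n) F k = \sum_(k < N) F k.
Proof.
move=> le e; rewrite -(subnKC le) big_split_ord /= [X in _ + X]big1 ?addr0 //.
by move=> k _; apply: e; rewrite leq_addr.
Qed.

Definition Mx (w : {poly {poly K}}) : nat := (\max_(s < size w) size (w`_s)%R)%N.

Lemma size_coef_Mx (w : {poly {poly K}}) s : (size (w`_s)%R <= Mx w)%N.
Proof.
case: (ltnP s (size w)) => [lt|ge].
  by apply: (@leq_bigmax _ (fun s : 'I_(size w) => size w`_s) (Ordinal lt)).
by rewrite nth_default // size_poly0.
Qed.

Lemma Sw_bound (w : {poly {poly K}}) Ns Nr A B :
  (size w <= Ns)%N -> (forall s, size (w`_s)%R <= Nr)%N ->
  Sw w A B = \sum_(s < Ns) \sum_(r < Nr) (w`_s)`_r * T r s A B.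
Proof.
move=> hs hr; rewrite /Sw.
rewrite (eq_bigr (fun s : 'I_(size w) => \sum_(r < Nr) (w`_s)`_r * T r s A B)); last first.
  by move=> s _; apply: (sum_widen (F := fun r => (w`_s)`_r * T r s A B)) => // k hk; rewrite nth_default ?mul0r.
apply: (sum_widen (F := fun s => \sum_(r < Nr) (w`_s)`_r * T r s A B)) => // k hk.
by apply: big1 => r _; rewrite (nth_default _ hk) coef0 mul0r.
Qed.

Lemma Sw_add w1 w2 A B : Sw (w1 + w2) A B = Sw w1 A B + Sw w2 A B.
Proof.
set Ns := maxn (size w1) (size w2); set Nr := maxn (Mx w1) (Mx w2).
have h1 s : (size (w1`_s)%R <= Nr)%N by rewrite (leq_trans (size_coef_Mx _ _)) // leq_maxl.
have h2 s : (size (w2`_s)%R <= Nr)%N by rewrite (leq_trans (size_coef_Mx _ _)) // leq_maxr.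
rewrite (@Sw_bound w1 Ns Nr) ?leq_maxl // (@Sw_bound w2 Ns Nr) ?leq_maxr //.
rewrite (@Sw_bound _ Ns Nr) ?size_polyD // => [|s]; last first.
  by rewrite coefD (leq_trans (size_polyD _ _)) // geq_max h1 h2.
rewrite -big_split; apply: eq_bigr => s _; rewrite -big_split; apply: eq_bigr => r _.
by rewrite !coefD mulrDl.
Qed.

Lemma Sw_scale cc w A B : Sw (cc%:P%:P * w) A B = cc * Sw w A B.
Proof.
rewrite (Sw_bound _ _ (leqnn _) (size_coef_Mx w)).
rewrite (@Sw_bound _ (size w) (Mx w)) => [||s]; last first.
- by rewrite coefCM mul_polyC (leq_trans (size_scale_leq _ _)) ?size_coef_Mx.
- by rewrite mul_polyC size_scale_leq.
rewrite mulr_sumr; apply: eq_bigr => s _; rewrite mulr_sumr; apply: eq_bigr => r _.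
by rewrite coefCM mul_polyC coefZ mulrA.
Qed.

Lemma Sw_opp w A B : Sw (- w) A B = - Sw w A B.
Proof.
have -> : - w = (-1)%:P%:P * w by rewrite !polyCN !polyC1 mulN1r.
by rewrite Sw_scale mulN1r.
Qed.

Lemma Sw_x w A B : Sw ('X%:P * w) A B = A2 (Sw w) A B.
Proof.
rewrite (@eq_A2 _ (fun x y => \sum_(s < size w) \sum_(r < Mx w) (w`_s)`_r * T r s x y)); last first.
  by move=> x y; apply: Sw_bound => //; apply: size_coef_Mx.
rewrite (@Sw_bound _ (size w) (Mx w).+1) => [||s]; last first.
- rewrite coefCM (leq_trans (size_polyMleq _ _)) // size_polyX /=.
  by rewrite ltnS size_coef_Mx.
- by rewrite mul_polyC size_scale_leq.
rewrite A2_sum; apply: eq_bigr => s _; rewrite A2_sum big_ord_recl (coefCM 'X w s).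
rewrite coefXM /= mul0r add0r.
by apply: eq_bigr => r _; rewrite A2_scale coefXM /=.
Qed.


Lemma Sw_0 A B : Sw 0 A B = 0.
Proof. by rewrite /Sw size_poly0 big_ord0. Qed.

Definition S1 (P : {poly K}) b := \sum_(s < size P) P`_s * iter s A1 d0 b.

Lemma S1_bound (P : {poly K}) N b : (size P <= N)%N ->
  S1 P b = \sum_(s < N) P`_s * iter s A1 d0 b.
Proof.
move=> le; apply: (sum_widen (F := fun s => P`_s * iter s A1 d0 b)) => // k hk.
by rewrite nth_default ?mul0r.
Qed.

Lemma S1_0 b : S1 0 b = 0.
Proof. by rewrite /S1 size_poly0 big_ord0. Qed.

Lemma S1_add (P1 P2 : {poly K}) b : S1 (P1 + P2) b = S1 P1 b + S1 P2 b.
Proof.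
set N := maxn (size P1) (size P2).
rewrite (@S1_bound P1 N) ?leq_maxl // (@S1_bound P2 N) ?leq_maxr //.
rewrite (@S1_bound _ N) ?size_polyD // -big_split; apply: eq_bigr => s _.
by rewrite coefD mulrDl.
Qed.

Lemma S1_scale cc (P : {poly K}) b : S1 (cc%:P * P) b = cc * S1 P b.
Proof.
rewrite (@S1_bound _ (size P)) ?mul_polyC ?size_scale_leq // mulr_sumr.
by apply: eq_bigr => s _; rewrite coefZ mulrA.
Qed.

Lemma S1_x (P : {poly K}) b : S1 ('X * P) b = A1 (S1 P) b.
Proof.
rewrite (@eq_A1 _ (fun x => \sum_(s < size P) P`_s * iter s A1 d0 x)) //.
rewrite (@S1_bound _ (size P).+1); last first.
  by rewrite (leq_trans (size_polyMleq _ _)) // size_polyX.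
rewrite A1_sum big_ord_recl coefXM /= mul0r add0r.
by apply: eq_bigr => s _; rewrite A1_scale coefXM /=.
Qed.

Lemma Sw_C (P : {poly K}) A B : Sw (P^:P) A B = Jf (S1 P) A B.
Proof.
rewrite (@Sw_bound _ (size P) 1) => [||s]; last first.
- by rewrite coef_map /= size_polyC_leq1.
- by rewrite size_map_polyC.
rewrite /Jf /S1; case: A => [|A].
  by apply: eq_bigr => s _; rewrite big_ord1 coef_map /= coefC eqxx.
by apply: big1 => s _; rewrite big_ord1 /T /= /Jf mulr0.
Qed.

Fixpoint W1 n : {poly K} :=
  match n with
  | 0 => 1
  | n'.+1 => 'X * W1 n' + (kap * gsum n')%:P *
               (match n' with 0 => 0 | n''.+1 => W1 n'' end)
  end.

Lemma W1_ok n b : S1 (W1 n) b = (b == n)%:R.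
Proof.
elim/ltn_ind: n b => -[|n] IH b.
  by rewrite /S1 /= size_poly1 big_ord1 coefC eqxx mul1r.
rewrite /= S1_add S1_scale S1_x (@eq_A1 _ (fun x => (x == n)%:R)); last first.
  by move=> x; rewrite IH.
rewrite /A1 /shift1 /D1.
case: n IH => [|n] IH.
  by rewrite S1_0 !mulr0 subr0 addr0; case: b.
rewrite IH //.
case: b => [|b] /=; rewrite eqSS.
  case: (eqVneq n 0%N) => [->|nz] /=; first by ring.
  by rewrite !mulr0 subr0 addr0.
rewrite eqSS; case: (eqVneq b.+1 n) => [<-|ne]; first by ring.
by rewrite !mulr0 subr0 addr0.
Qed.

Fixpoint W2 m n : {poly {poly K}} :=
  match m with
  | 0 => (W1 n)^:P
  | m'.+1 => 'X%:P * W2 m' n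
      + (kap * gsum m')%:P%:P * (match m' with 0 => 0 | m''.+1 => W2 m'' n end)
      + (kap * pp ^+ m' * rr * gsum n)%:P%:P *
          (match n with 0 => 0 | n'.+1 => W2 m' n' end)
  end.

Lemma D2_d2 m n A B :
  D2 a d q i j (d2 m n) A B =
  gsum m * (if m is m'.+1 then d2 m' n A B else 0)
  + pp ^+ m * rr * gsum n * (if n is n'.+1 then d2 m n' A B else 0).
Proof.
rewrite /D2 /d2; congr (_ + _).
  case: m => [|m] /=; first by rewrite !mulr0.
  by rewrite eqSS; case: (A =P m) => [->|_] //=; rewrite !mulr0.
case: n => [|n] /=; first by rewrite andbF !mulr0.
rewrite eqSS; case: (A =P m) => [->|_] /=; last by rewrite !mulr0.
by case: (B =P n) => [->|_] //=; rewrite !mulr0.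
Qed.

Lemma W2_ok m n A B : Sw (W2 m n) A B = d2 m n A B.
Proof.
elim/ltn_ind: m n A B => -[|m] IH n A B.
  by rewrite /= Sw_C /Jf W1_ok /d2; case: A.
rewrite /= !Sw_add !Sw_scale Sw_x (@eq_A2 _ (d2 m n)); last by move=> x y; rewrite IH.
have -> : Sw (if m is m'.+1 then W2 m' n else 0) A B =
          (if m is m'.+1 then d2 m' n A B else 0).
  by case: m IH => [|m] IH; rewrite ?Sw_0 ?IH.
have -> : Sw (if n is n'.+1 then W2 m n' else 0) A B =
          (if n is n'.+1 then d2 m n' A B else 0).
  by case: n => [|n]; rewrite ?Sw_0 ?IH.
have -> : d2 m.+1 n A B = A2 (d2 m n) A B + kap * D2 a d q i j (d2 m n) A B.
  rewrite /A2 subrK /shiftA /d2; case: A => [|A] //.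
by rewrite D2_d2 mulrDr !mulrA addrA.
Qed.


Lemma iter_A1_tri s n : (s <= n)%N -> iter s A1 d0 n = (n == s)%:R.
Proof.
elim: s n => [|s IH] [|n] //= le.
rewrite /A1 /shift1 /D1 IH // (IH n.+2); last by lia.
have -> : (n.+2 == s) = false by apply/negbTE; lia.
by rewrite !mulr0 subr0.
Qed.

Lemma T_tri r s A B : (r + s <= A + B)%N -> T r s A B = d2 r s A B.
Proof.
elim: r A B => [|r IH] A B le /=.
  rewrite /Jf /d2; case: A le => [|A] le //=.
  by rewrite add0n in le; rewrite iter_A1_tri.
rewrite /A2 /shiftA /D2 IH ?IH; try lia.
have -> : d2 r s A.+1 B = 0.
  rewrite /d2; case: (A.+1 =P r) => [eA|] //=; case: (B =P s) => [eB|] //=; lia.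
have -> : d2 r s A B.+1 = 0.
  rewrite /d2; case: (A =P r) => [eA|] //=; case: (B.+1 =P s) => [eB|] //=; lia.
rewrite !mulr0 addr0 mulr0 subr0.
case: A le => [|A] le //; rewrite IH; last by lia.
by rewrite /d2 eqSS.
Qed.

Lemma sum_delta N (F : nat -> K) x : (x < N)%N ->
  \sum_(k < N) F k * (x == k)%:R = F x.
Proof.
move=> xN; rewrite (bigD1 (Ordinal xN)) //= eqxx mulr1 big1 ?addr0 // => k nk.
have -> : (x == k) = false.
  by apply/negbTE; apply: contra nk => /eqP e; apply/eqP/val_inj; rewrite /= e.
by rewrite mulr0.
Qed.

Lemma Sw_inj v : (forall A B, Sw v A B = 0) -> v = 0.
Proof.
move=> H; set N := maxn (size v) (Mx v).
have hs : (size v <= N)%N by rewrite leq_maxl.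
have hr s : (size (v`_s)%R <= N)%N by rewrite (leq_trans (size_coef_Mx v s)) // leq_maxr.
have E A B : Sw v A B = \sum_(s < N) \sum_(r < N) (v`_s)`_r * T r s A B.
  exact: Sw_bound.
have base r s : (N <= r)%N || (N <= s)%N -> (v`_s)`_r = 0.
  case/orP => h; last by rewrite (nth_default _ (leq_trans hs h)) coef0.
  exact: nth_default (leq_trans (hr s) h).
have key k : forall r s, (N + N <= r + s + k)%N -> (v`_s)`_r = 0.
  elim: k => [|k IHk] r s h.
    by apply: base; apply/orP; case: (leqP N r) => hr'; [left|right]; lia.
  case: (leqP (N + N) (r + s + k)) => [h'|h']; first exact: IHk.
  case: (boolP ((N <= r) || (N <= s))%N) => [/base //|].
  rewrite negb_or -!ltnNge => /andP [rN sN].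
  have := H r s; rewrite E.
  rewrite (eq_bigr (fun s' : 'I_N => \sum_(r' < N) ((v`_s')`_r' * (s == s')%:R) * (r == r')%:R)); last first.
    move=> s' _; apply: eq_bigr => r' _.
    case: (leqP (N + N) (r' + s' + k)) => [h2|h2].
      by rewrite IHk // !mul0r.
    rewrite T_tri; last by lia.
    by rewrite /d2 -mulrA -natrM mulnb andbC.
  rewrite (eq_bigr (fun s' : 'I_N => (v`_s')`_r * (s == s')%:R)); last first.
    by move=> s' _; rewrite (sum_delta (fun r' => (v`_s')`_r' * (s == s')%:R)).
  by rewrite (sum_delta (fun s' => (v`_s')`_r)).
apply/polyP => s; rewrite coef0; apply/polyP => r; rewrite coef0.
by apply: (key (N + N)); lia.
Qed.

End Alg.



Lemma step2 (R : comNzRingType) (xx X g c1 c2 P1 P2 w wm wn h hm hn : R) k :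
  w * g ^+ k = h -> wm * g ^+ k = hm * g -> wn * g ^+ k = hn * g ->
  xx * g = 2 * X -> c1 * g ^+ 2 = - P1 -> c2 * g ^+ 2 = - P2 ->
  (xx * w + c1 * wm + c2 * wn) * g ^+ k.+1 = 2 * X * h - P1 * hm - P2 * hn.
Proof.
move=> Hw Hm Hn HX H1 H2.
transitivity ((xx * g) * (w * g ^+ k) + (c1 * g) * (wm * g ^+ k) + (c2 * g) * (wn * g ^+ k)).
  by rewrite exprS; ring.
rewrite Hw Hm Hn HX.
transitivity (2 * X * h + (c1 * g ^+ 2) * hm + (c2 * g ^+ 2) * hn); first by ring.
by rewrite H1 H2; ring.
Qed.

Lemma step1 (R : comNzRingType) (xx X g c1 P1 w wm h hm : R) k :
  w * g ^+ k = h -> wm * g ^+ k = hm * g ->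
  xx * g = 2 * X -> c1 * g ^+ 2 = - P1 ->
  (xx * w + c1 * wm) * g ^+ k.+1 = 2 * X * h - P1 * hm.
Proof.
move=> Hw Hm HX H1.
transitivity ((xx * g) * (w * g ^+ k) + (c1 * g) * (wm * g ^+ k)).
  by rewrite exprS; ring.
rewrite Hw Hm HX.
transitivity (2 * X * h + (c1 * g ^+ 2) * hm); first by ring.
by rewrite H1; ring.
Qed.

Section Herm.
Variables (I : finType) (K : fieldType) (a : I -> I -> int) (d : I -> nat).
Variables (q : K) (tau : I -> I) (c : I -> K) (i j : I).
Variables (L : fieldType) (phi : {rmorphism K -> L}) (X Y g P R : {poly {poly L}}).
Local Notation kap := (kappa a d q tau c i).
Local Notation Phi := (map_poly (map_poly phi)).
Hypotheses (HX : 'X%:P * g = 2 * X) (HY : 'X * g = 2 * Y).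
Hypothesis (H1 : forall m, (phi (kap * gsum a d q i m))%:P%:P * g ^+ 2 = - (1 - P ^+ m)).
Hypothesis (H2 : forall m n,
  (phi (kap * pp a d q i ^+ m * rr a d q i j * gsum a d q i n))%:P%:P * g ^+ 2
  = - (P ^+ m * (1 - P ^+ n) * R)).

Lemma PhiC (u : K) : Phi (u%:P%:P) = (phi u)%:P%:P.
Proof. by rewrite map_polyC; congr polyC; apply: map_polyC. Qed.

Lemma PhiD (u v : {poly {poly K}}) : Phi (u + v) = Phi u + Phi v.
Proof. by rewrite rmorphD. Qed.
Lemma PhiM (u v : {poly {poly K}}) : Phi (u * v) = Phi u * Phi v.
Proof. by rewrite rmorphM. Qed.
Lemma Phi0 : Phi 0 = 0.
Proof. by rewrite rmorph0. Qed.
Lemma PhiXC : Phi ('X%:P) = 'X%:P.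
Proof. by rewrite map_polyC; congr polyC; apply: map_polyX. Qed.
Lemma PsiD (u v : {poly K}) : (u + v)^:P = u^:P + v^:P.
Proof. by rewrite rmorphD. Qed.
Lemma PsiM (u v : {poly K}) : (u * v)^:P = u^:P * v^:P.
Proof. by rewrite rmorphM. Qed.
Lemma Psi0 : (0 : {poly K})^:P = 0.
Proof. by rewrite rmorph0. Qed.
Lemma Psi1 : (1 : {poly K})^:P = 1.
Proof. by rewrite rmorph1. Qed.
Lemma PsiX : ('X : {poly K})^:P = 'X.
Proof. by rewrite map_polyX. Qed.
Lemma PsiC (u : K) : (u%:P)^:P = u%:P%:P.
Proof. by rewrite map_polyC. Qed.
Lemma PhiX : Phi 'X = 'X.
Proof. by rewrite map_polyX. Qed.
Lemma Phi1 : Phi 1 = 1.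
Proof. by rewrite rmorph1. Qed.

Lemma W1_herm n : Phi ((W1 a d q tau c i n)^:P) * g ^+ n = hermite1 Y P n.
Proof.
elim/ltn_ind: n => -[|n] IH.
  by rewrite /= !rmorph1 mul1r expr0.
rewrite /= PsiD !PsiM PsiX PsiC PhiD !PhiM PhiX PhiC.
case: n IH => [|n] IH.
  by rewrite Psi0 Phi0 mulr0 addr0 Psi1 Phi1 mulr1 expr1; exact: HY.
apply: step1.
- by rewrite IH.
- by rewrite exprSr mulrA IH.
- exact: HY.
- exact: H1.
Qed.

Lemma W2_herm m n :
  Phi (W2 a d q tau c i j m n) * g ^+ (m + n) = hermite2 X Y P R m n.
Proof.
elim/ltn_ind: m n => -[|m] IH n; first by rewrite /= add0n W1_herm.
rewrite /= !PhiD !PhiM !PhiC PhiXC addSn.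
apply: step2.
- exact: IH.
- case: m IH => [|m] IH; first by rewrite Phi0 !mul0r.
  by rewrite addSn exprSr mulrA IH.
- case: n => [|n]; first by rewrite Phi0 !mul0r.
  by rewrite addnS exprSr mulrA IH.
- exact: HX.
- exact: H1.
- exact: H2.
Qed.

End Herm.

Lemma polyCXn (R : nzRingType) (x : R) k : (x ^+ k)%:P = x%:P ^+ k.
Proof. by rewrite rmorphXn. Qed.

Theorem proposition4p8 (I : finType) (a : I -> I -> int) (d : I -> nat)
  (K : fieldType) (q : K) (tau : I -> I) (c : I -> K) (i j : I) (m n : nat) :
  (* generalized Cartan matrix *)
  (forall k, a k k = 2) ->
  (forall k l, k != l -> a k l <= 0) ->
  (forall k l, a k l = 0 <-> a l k = 0) ->
  (* symmetrizable, with relatively prime positive d_k *)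
  (forall k, (0 < d k)%N) ->
  (forall e : nat, (forall k, (e %| d k)%N) -> e = 1%N) ->
  (forall k l, (d k)%:Z * a k l = (d l)%:Z * a l k) ->
  (* K of characteristic zero, q in K^x with q^{2 d_k} <> 1 *)
  [pchar K] =i pred0 ->
  q != 0 ->
  (forall k, q ^+ (2 * d k)%N != 1) ->
  (* tau an involutive diagram automorphism, c_k *)
  (forall k, tau (tau k) = k) ->
  (forall k l, a (tau k) (tau l) = a k l) ->
  (forall k, c k != 0) ->
  (forall k, a k (tau k) = 0 -> c k = c (tau k)) ->
  tau i = i -> i != j ->
  (exists w, expansion a d q tau c i j m n w) /\
  forall w, expansion a d q tau c i j m n w ->
    forall (L : fieldType) (phi : {rmorphism K -> L}) (b : L),
      b ^+ 2 = phi ((q ^+ d i - (q ^+ d i)^-1) ^+ 2 / (4 * c i * q ^+ d i)) ->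
      map_poly (map_poly phi) w =
        hermite2 (b *: 'X)%:P (b%:P%:P * 'X)
                 (phi ((q ^+ d i) ^+ 2))%:P%:P (phi ((q ^+ d i) ^ a i j))%:P%:P m n
        * ((2 * b) ^- (m + n))%:P%:P.
Proof.
move=> Haii _ _ _ _ _ Hchar q0 Hq2 Htt _ Hc0 _ taui ij.
have tauj : tau j != i.
  apply/eqP => e; move/eqP: ij; apply.
  by rewrite -[in RHS](Htt j) e taui.
split.
  exists (W2 a d q tau c i j m n).
  by apply/(expansion_iff a d c q0 ij taui tauj) => A B; rewrite W2_ok.
move=> w /(expansion_iff a d c q0 ij taui tauj) Hw L phi b Hb.
have -> : w = W2 a d q tau c i j m n.
  apply/eqP; rewrite -subr_eq0; apply/eqP; apply: (Sw_inj (a:=a) (d:=d) (c:=c) q0 ij tauj) => A B.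
  by rewrite Sw_add Sw_opp -Hw W2_ok subrr.
set qi := q ^+ d i.
have qi0 : qi != 0 by rewrite expf_neq0.
have qi2 : qi ^+ 2 != 1 by rewrite /qi -exprM mulnC.
have qd : qi - qi^-1 != 0.
  apply: contra qi2; rewrite subr_eq0 => /eqP e.
  by rewrite expr2 {2}e mulfV.
have qq : qi * qi - 1 != 0 by rewrite -expr2 subr_eq0.
have n4 : (4 : K) != 0 by move/pcharf0P: Hchar => ->.
have n2 : (2 : K) != 0 by move/pcharf0P: Hchar => ->.
have Hpp : pp a d q i = qi ^+ 2 by rewrite /pp Haii -exprz_exp.
have Hrr : rr a d q i j = qi ^ a i j by rewrite /rr -exprz_exp.
have Hkap : kappa a d q tau c i = c i * qi ^+ 2 / (qi - qi^-1).
  by rewrite /kappa taui bform_sr_sr Haii -exprz_exp.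
set lam := c i * qi / (qi - qi^-1) ^+ 2.
have Hks k : kappa a d q tau c i * gsum a d q i k = - (1 - (qi ^+ 2) ^+ k) * lam.
  rewrite opprB (subrX1 (qi ^+ 2) k) Hkap /gsum Hpp /lam.
  by field; rewrite qi0 qq.
set mu := (qi - qi^-1) ^+ 2 / (4 * c i * qi).
have Hlm : lam * (2 ^+ 2 * mu) = 1.
  by rewrite /lam /mu; field; rewrite qi0 Hc0 n4 qq.
have Hb0 : phi lam * (2 * b) ^+ 2 = 1.
  rewrite exprMn Hb.
  have -> : (2 : L) ^+ 2 = phi (2 ^+ 2) by rewrite rmorphXn rmorph_nat.
  rewrite -!rmorphM; move: Hlm; rewrite /mu /qi => E.
  by transitivity (phi 1); [congr (phi _); exact: E | exact: rmorph1].
have L1 k : phi (kappa a d q tau c i * gsum a d q i k) * (2 * b) ^+ 2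
            = - (1 - phi (qi ^+ 2) ^+ k).
  by rewrite Hks rmorphM -mulrA Hb0 mulr1 rmorphN rmorphB rmorph1 [phi (_ ^+ k)]rmorphXn.
have L2 k l : phi (kappa a d q tau c i * pp a d q i ^+ k * rr a d q i j * gsum a d q i l)
                * (2 * b) ^+ 2
            = - (phi (qi ^+ 2) ^+ k * (1 - phi (qi ^+ 2) ^+ l) * phi (qi ^ a i j)).
  have -> : kappa a d q tau c i * pp a d q i ^+ k * rr a d q i j * gsum a d q i l
          = pp a d q i ^+ k * rr a d q i j * (kappa a d q tau c i * gsum a d q i l) by ring.
  rewrite Hks Hpp Hrr.
  have -> : qi ^+ 2 ^+ k * qi ^ a i j * (- (1 - qi ^+ 2 ^+ l) * lam)
          = (qi ^+ 2 ^+ k * qi ^ a i j * - (1 - qi ^+ 2 ^+ l)) * lam by ring.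
  rewrite rmorphM -mulrA Hb0 mulr1 !rmorphM.
  by rewrite rmorphN rmorphB rmorph1 !rmorphXn; ring.
set g := ((2 * b)%:P)%:P : {poly {poly L}}.
have HX : 'X%:P * g = 2 * (b *: 'X)%:P.
  by rewrite /g -mul_polyC !polyCM !polyC_natr; ring.
have HY : 'X * g = 2 * (b%:P%:P * 'X).
  by rewrite /g !polyCM !polyC_natr; ring.
have H1 k : (phi (kappa a d q tau c i * gsum a d q i k))%:P%:P * g ^+ 2
            = - (1 - (phi (qi ^+ 2))%:P%:P ^+ k).
  have E := congr1 (fun u => u%:P%:P) (L1 k); move: E => /=.
  by rewrite /g !(polyCM, polyCN, polyCB, polyC1, polyCXn).
have H2 k l : (phi (kappa a d q tau c i * pp a d q i ^+ k * rr a d q i j * gsum a d q i l))%:P%:P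
                * g ^+ 2
            = - ((phi (qi ^+ 2))%:P%:P ^+ k * (1 - (phi (qi ^+ 2))%:P%:P ^+ l)
                 * (phi (qi ^ a i j))%:P%:P).
  have E := congr1 (fun u => u%:P%:P) (L2 k l); move: E => /=.
  by rewrite /g !(polyCM, polyCN, polyCB, polyC1, polyCXn).
rewrite -(W2_herm HX HY H1 H2 m n) -mulrA.
have b0 : 2 * b != 0.
  rewrite mulf_neq0 //.
    by rewrite -(rmorph_nat phi 2) fmorph_eq0.
  apply/eqP => b0; move: Hb; rewrite b0 expr0n /= => /esym/eqP.
  rewrite fmorph_eq0 -/mu /mu mulf_eq0 invr_eq0 !mulf_eq0 !expf_eq0 /=.
  by rewrite (negbTE qd) (negbTE n4) (negbTE (Hc0 i)) (negbTE q0) andbF.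
by rewrite /g -!polyCXn -!polyCM -exprVn -exprMn mulfV // expr1n !polyC1 mulr1.
Qed.
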